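(* Let $\rho>0$, $c>0$, $l>0$, $h_0>0$, $k_0>0$, $\beta>0$, $T_f\in\mathbb{R}$ and $T_\infty<T_f$ be constants, and let $k(T)=k_0\left(1+\beta\frac{T-T_\infty}{T_f-T_\infty}\right)$. Put $\alpha_0=\frac{k_0}{\rho c}$, $\mathrm{Ste}_\infty=\frac{c(T_f-T_\infty)}{l}$, $\mathrm{Bi}=\frac{h_0\sqrt{\alpha_0}}{k_0}$ and $\gamma=2\,\mathrm{Bi}$. Consider the Stefan problem of finding $T(x,t)$ and $s(t)$ such that \begin{align*} &\rho c\, T_t(x,t)=(k(T(x,t))T_x(x,t))_x, && 0<x<s(t),\ t>0,\\ &s(0)=0,&&\\ &T(s(t),t)=T_f, && t>0,\\ &k(T_f)T_x(s(t),t)=\rho l\,\dot s(t), && t>0,\\ &k(T(0,t))T_x(0,t)=\frac{h_0}{\sqrt t}\,(T(0,t)-T_\infty), && t>0. \end{align*} Then this problem has the solution $$T(x,t)=(T_f-T_\infty)\,\varphi\!\left(\frac{x}{2\sqrt{\alpha_0 t}}\right)+T_\infty\quad(0<x<s(t),\ t>0),\qquad s(t)=2\lambda\sqrt{\alpha_0 t}\quad(t>0),$$ with a function $\varphi$ and a parameter $\lambda>0$, if and only if $\varphi$ and $\lambda$ satisfy \begin{align*} &[(1+\beta y(\eta))y'(\eta)]'+2\eta y'(\eta)=0, && 0<\eta<\lambda,\\ &y'(0)+\beta y(0)y'(0)-\gamma y(0)=0,&&\\ &y(\lambda)=1,&& \end{align*} (with $y=\varphi$) together with the condition $$\frac{\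varphi'(\lambda)}{\lambda}=\frac{2}{(1+\beta)\,\mathrm{Ste}_\infty}.$$
   Context: $T$ is the temperature of the solid region $0<x<s(t)$ and $s$ is the free boundary; $\mathrm{Ste}_\infty$ is the Stefan number and $\mathrm{Bi}$ the generalized Biot number. *)

(* Defs.v *)
From Stdlib Require Import Reals.
From Coquelicot Require Import Coquelicot.
Open Scope R_scope.

Definition kcond (k0 beta Tf Tinf T : R) : R :=
  k0 * (1 + beta * ((T - Tinf) / (Tf - Tinf))).

Definition alpha0 (rho c k0 : R) : R := k0 / (rho * c).
Definition Ste_inf (c l Tf Tinf : R) : R := c * (Tf - Tinf) / l.
Definition Bi (rho c h0 k0 : R) : R := h0 * sqrt (alpha0 rho c k0) / k0.

Definition stefan_solution (rho c l h0 k0 beta Tf Tinf : R)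
    (T : R -> R -> R) (s : R -> R) : Prop :=
  let k := kcond k0 beta Tf Tinf in
  (forall x t, 0 < t -> 0 < x < s t ->
     ex_derive (fun xi => T xi t) x /\
     exists Tt, is_derive (fun tau => T x tau) t Tt /\
       is_derive (fun xi => k (T xi t) * Derive (fun xi' => T xi' t) xi) x
                 (rho * c * Tt))
  /\ s 0 = 0
  /\ (forall t, 0 < t -> T (s t) t = Tf)
  /\ (forall t, 0 < t ->
        ex_derive (fun xi => T xi t) (s t) /\ ex_derive s t /\
        k Tf * Derive (fun xi => T xi t) (s t) = rho * l * Derive s t)
  /\ (forall t, 0 < t ->
        ex_derive (fun xi => T xi t) 0 /\
        k (T 0 t) * Derive (fun xi => T xi t) 0 = h0 / sqrt t * (T 0 t - Tinf)).

Definition ode_problem (beta gamma : R) (y : R -> R) (lam : R) : Prop :=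
  (forall eta, 0 < eta < lam ->
     is_derive (fun e => (1 + beta * y e) * Derive y e) eta
               (- (2 * eta * Derive y eta)))
  /\ Derive y 0 + beta * y 0 * Derive y 0 - gamma * y 0 = 0
  /\ y lam = 1.

(* Main.v *)
Require Import Defs.
From Stdlib Require Import Reals.
From Coquelicot Require Import Coquelicot.
Open Scope R_scope.
From Stdlib Require Import Lra Psatz.
Lemma scale_deriv (g : R->R) (C q x v : R) : q <> 0 -> C <> 0 ->
 (is_derive (fun xi => C * g (xi/q)) x v <-> is_derive g (x/q) (v*q/C)).
Proof. intros hq hC. split; intro H.
- assert (H' : is_derive (fun xi => C * g (xi/q)) ((x/q)*q) v).
  { replace ((x/q)*q) with x by (field; auto). exact H. }
  assert (H2 : is_derive (fun e => /C * (C * g (e*q/q))) (x/q) (/C * (q * v))).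
  { apply (is_derive_scal (fun e => C * g (e*q/q))).
    apply (is_derive_comp (fun xi => C * g (xi/q)) (fun e => e*q)).
    exact H'. 
    change (is_derive (fun e => e*q) (x/q) q).
    auto_derive; auto. ring. }
  apply is_derive_ext with (f := fun e => /C * (C * g (e*q/q))).
  { intros e. simpl. assert (Ee : e*q/q = e :> R) by (field; auto). rewrite Ee. field. auto. }
  replace (v*q/C) with (/C * (q*v)) by (field; auto). exact H2.
- assert (H2 : is_derive (fun xi => C * g (xi/q)) x (C * (/q * (v*q/C)))).
  { apply (is_derive_scal (fun xi => g (xi/q))).
    apply (is_derive_comp g (fun xi => xi/q)). exact H.
    change (is_derive (fun xi => xi/q) x (/q)). auto_derive; auto. field; auto. }
  assert (Ev : C * (/q*(v*q/C)) = v) by (field; auto). rewrite Ev in H2. exact H2.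
Qed.
Lemma dTt (phi : R -> R) (hphi : forall e, ex_derive phi e) D Tinf a t x :
  0 < a -> 0 < t ->
  is_derive (fun tau : R => D*phi(x/(2*sqrt(a*tau)))+Tinf) t
   (D*Derive phi (x/(2*sqrt(a*t))) * (-(x/(2*sqrt(a*t)))/(2*t))).
Proof. intros ha ht.
 assert (hS: 0 < sqrt (a*t)) by (apply sqrt_lt_R0, Rmult_lt_0_compat; lra).
 assert (hS2 := sqrt_sqrt (a*t) (Rlt_le _ _ (Rmult_lt_0_compat _ _ ha ht))).
 auto_derive. split. apply hphi. split. nra. split; auto. lra.
 change (D * (x * (- (2 * (a * 1 * / (2 * sqrt (a * t)))) * / (2 * sqrt (a * t) * (2 * sqrt (a * t)))) *
  Derive phi (x * / (2 * sqrt (a * t)))) =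
 D * Derive phi (x / (2 * sqrt (a * t))) * (- (x / (2 * sqrt (a * t))) / (2 * t))).
 set (S := sqrt (a*t)) in *. 
 replace (a*1) with (S*S/t) by (rewrite hS2; field; lra).
 unfold Rdiv. field. lra.
Qed.
Lemma dTx (phi : R -> R) (hphi : forall e, ex_derive phi e) (D Tinf q xi : R) :
  q <> 0 -> is_derive (fun xi' : R => D*phi(xi'/q)+Tinf) xi (D * Derive phi (xi/q) / q).
Proof. intros hq. auto_derive. auto.
 change (D * (1 * / q * Derive phi (xi / q)) = D * Derive phi (xi / q) / q). field; auto. Qed.

Lemma flux (phi : R -> R) (hphi : forall e, ex_derive phi e) (k0 beta Tf Tinf q xi : R) :
  q <> 0 -> Tf - Tinf <> 0 ->
  kcond k0 beta Tf Tinf ((Tf - Tinf)*phi(xi/q)+Tinf) *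
    Derive (fun xi' => (Tf - Tinf)*phi(xi'/q)+Tinf) xi
  = (k0*(Tf - Tinf)/q) * ((1+beta*phi(xi/q))*Derive phi (xi/q)).
Proof. intros hq hD. rewrite (is_derive_unique _ _ _ (dTx phi hphi (Tf - Tinf) Tinf q xi hq)).
 unfold kcond. field. auto. Qed.

Lemma ds (lam a t : R) : 0 < a -> 0 < t ->
  is_derive (fun tau : R => 2*lam*sqrt(a*tau)) t (lam*a/sqrt(a*t)).
Proof. intros ha ht.
 assert (hS: 0 < sqrt (a*t)) by (apply sqrt_lt_R0, Rmult_lt_0_compat; lra).
 auto_derive. nra.
 change (2 * lam * (a * 1 * / (2 * sqrt (a * t))) = lam * a / sqrt (a * t)). field. lra. Qed.

Theorem theorem2p1 (rho c l h0 k0 beta Tf Tinf : R) :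
  0 < rho -> 0 < c -> 0 < l -> 0 < h0 -> 0 < k0 -> 0 < beta -> Tinf < Tf ->
  forall (phi : R -> R) (lam : R),
    0 < lam ->
    (forall e, ex_derive phi e) ->
    (stefan_solution rho c l h0 k0 beta Tf Tinf
       (fun x t => (Tf - Tinf) * phi (x / (2 * sqrt (alpha0 rho c k0 * t))) + Tinf)
       (fun t => 2 * lam * sqrt (alpha0 rho c k0 * t))
     <->
     (ode_problem beta (2 * Bi rho c h0 k0) phi lam /\
      Derive phi lam / lam = 2 / ((1 + beta) * Ste_inf c l Tf Tinf))).
Proof.
  intros hrho hc hl hh0 hk0 hbeta hT phi lam hlam hphi.
  unfold Bi, Ste_inf, stefan_solution, ode_problem. cbv beta zeta.
  assert (ha : 0 < alpha0 rho c k0) by (unfold alpha0; apply Rdiv_lt_0_compat; nra).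
  assert (Ea : alpha0 rho c k0 * (rho * c) = k0) by (unfold alpha0; field; lra).
  set (a := alpha0 rho c k0) in *.
  assert (hD : Tf - Tinf <> 0) by lra.
  assert (hDp : 0 < Tf - Tinf) by lra.
  set (D := Tf - Tinf) in *.
  assert (hsa : 0 < sqrt a) by (apply sqrt_lt_R0; lra).
  assert (hsa2 := sqrt_sqrt a ltac:(lra)).
  split.
  - intros [H1 [H2 [H3 [H4 H5]]]].
    assert (E1 : sqrt (a*1) = sqrt a) by (rewrite Rmult_1_r; reflexivity).
    assert (hq : 2 * sqrt (a*1) <> 0) by (rewrite E1; lra).
    split; [split; [|split] |].
    + intros eta [he1 he2].
      set (q := 2 * sqrt (a*1)) in *.
      assert (hx : 0 < eta * q < 2 * lam * sqrt (a*1)).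
      { unfold q; rewrite E1; split; nra. }
      destruct (H1 (eta*q) 1 ltac:(lra) hx) as [_ [Tt [HTt Hfl]]].
      assert (ETt : Tt = D*Derive phi (eta*q/(2*sqrt(a*1))) * (-(eta*q/(2*sqrt(a*1)))/(2*1))).
      { rewrite <- (is_derive_unique _ _ _ HTt).
        apply is_derive_unique. apply dTt; auto; lra. }
      fold q in ETt.
      assert (Eeq : eta*q/q = eta) by (field; auto).
      rewrite Eeq in ETt.
      assert (Hfl2 : is_derive (fun xi => (k0*D/q) * ((fun e => (1+beta*phi e)*Derive phi e) (xi/q))) (eta*q) (rho*c*Tt)).
      { eapply is_derive_ext; [| exact Hfl]. intro xi. simpl. apply flux; auto. }
      assert (hC : k0*D/q <> 0) by (apply Rmult_integral_contrapositive_currified; [apply Rmult_integral_contrapositive_currified; lra | apply Rinv_neq_0_compat; auto]).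
      apply scale_deriv in Hfl2; auto.
      rewrite Eeq in Hfl2.
      assert (Ev: rho*c*Tt*q/(k0*D/q) = -(2*eta*Derive phi eta)).
      { rewrite ETt. unfold q. rewrite E1. rewrite <- Ea. rewrite <- hsa2 at 2. field. repeat split; lra. }
      rewrite Ev in Hfl2. exact Hfl2.
    + destruct (H5 1 ltac:(lra)) as [_ E].
      rewrite (flux phi hphi) in E; auto. fold D in E.
      replace (0/(2*sqrt(a*1))) with 0 in E by (field; rewrite E1; lra).
      rewrite E1, sqrt_1 in E.
      assert (E' : (1+beta*phi 0)*Derive phi 0 = 2*sqrt a*h0*phi 0/k0).
      { apply Rmult_eq_reg_l with (k0*D/(2*sqrt a)).
        rewrite E. field. lra.
        apply Rmult_integral_contrapositive_currified; [apply Rmult_integral_contrapositive_currified; lra | apply Rinv_neq_0_compat; lra]. }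
      assert (Eg : forall u v, u + beta*v*u - 2*(h0*sqrt a/k0)*v = (1+beta*v)*u - 2*(h0*sqrt a/k0)*v) by (intros; ring).
      rewrite Eg, E'. field. lra.
    + pose proof (H3 1 ltac:(lra)) as E.
      replace (2*lam*sqrt(a*1)/(2*sqrt(a*1))) with lam in E by (field; rewrite E1; lra).
      apply Rmult_eq_reg_l with D; [|lra]. unfold D in E |- *. nra.
    + destruct (H4 1 ltac:(lra)) as [_ [_ E]].
      rewrite (is_derive_unique _ _ _ (ds lam a 1 ha ltac:(lra))) in E.
      assert (Ex : Derive (fun xi : R => D*phi(xi/(2*sqrt(a*1)))+Tinf) (2*lam*sqrt(a*1))
         = D*Derive phi (2*lam*sqrt(a*1)/(2*sqrt(a*1)))/(2*sqrt(a*1)))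
        by (apply is_derive_unique, dTx; auto).
      rewrite Ex in E.
      replace (2*lam*sqrt(a*1)/(2*sqrt(a*1))) with lam in E by (field; rewrite E1; lra).
      assert (Ek : kcond k0 beta Tf Tinf Tf = k0*(1+beta)) by (unfold kcond; fold D; field; exact hD).
      rewrite Ek, E1 in E.
      assert (E' : Derive phi lam = 2*l*lam/((1+beta)*c*D)).
      { apply Rmult_eq_reg_l with (k0*(1+beta)*D/(2*sqrt a)).
        transitivity (rho*l*(lam*a/sqrt a)). rewrite <- E. field. lra.
        rewrite <- Ea. field. repeat split; lra.
        apply Rmult_integral_contrapositive_currified; [apply Rmult_integral_contrapositive_currified; [apply Rmult_integral_contrapositive_currified|]; lra | apply Rinv_neq_0_compat; lra]. }
      rewrite E'. field. repeat split; lra.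
  - intros [[Hode [H0 H1]] Hst].
    assert (Ephi' : Derive phi lam = 2*l*lam/((1+beta)*c*D)).
    { replace (Derive phi lam) with (Derive phi lam / lam * lam) by (field; lra).
      rewrite Hst. field. repeat split; lra. }
    assert (E0 : (1+beta*phi 0)*Derive phi 0 = 2*(h0*sqrt a/k0)*phi 0).
    { apply Rminus_diag_uniq. transitivity (Derive phi 0 + beta * phi 0 * Derive phi 0 - 2 * (h0 * sqrt a / k0) * phi 0). ring. exact H0. }
    assert (Ek : kcond k0 beta Tf Tinf Tf = k0*(1+beta)) by (unfold kcond; fold D; field; exact hD).
    split; [|split; [|split; [|split]]].
    + intros x t ht hx.
      assert (hS : 0 < sqrt (a*t)) by (apply sqrt_lt_R0, Rmult_lt_0_compat; lra).
      assert (HS2 := sqrt_sqrt (a*t) (Rlt_le _ _ (Rmult_lt_0_compat _ _ ha ht))).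
      assert (hq : 2*sqrt(a*t) <> 0) by lra.
      split. { eexists; apply dTx; auto. }
      exists (D*Derive phi (x/(2*sqrt(a*t))) * (-(x/(2*sqrt(a*t)))/(2*t))).
      split. { apply dTt; auto. }
      apply is_derive_ext with (f := fun xi => (k0*D/(2*sqrt(a*t))) * ((fun e => (1+beta*phi e)*Derive phi e) (xi/(2*sqrt(a*t))))).
      { intro xi. cbv beta. symmetry. apply flux; auto. }
      assert (hC : k0*D/(2*sqrt(a*t)) <> 0) by (apply Rmult_integral_contrapositive_currified; [apply Rmult_integral_contrapositive_currified; lra | apply Rinv_neq_0_compat; auto]).
      apply (proj2 (scale_deriv (fun e => (1+beta*phi e)*Derive phi e) (k0*D/(2*sqrt(a*t))) (2*sqrt(a*t)) x _ hq hC)).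
      set (eta := x/(2*sqrt(a*t))).
      set (S := sqrt(a*t)) in *.
      assert (Heta : eta*(2*S) = x) by (unfold eta; field; lra).
      assert (Ev : rho * c * (D * Derive phi eta * (- eta / (2 * t))) * (2 * S) / (k0 * D / (2 * S)) = -(2*eta*Derive phi eta)).
      { rewrite <- Ea. replace a with (S*S/t) by (rewrite HS2; field; lra). field. repeat split; lra. }
      rewrite Ev. apply Hode. split.
      { unfold eta; apply Rdiv_lt_0_compat; lra. }
      { apply Rmult_lt_reg_r with (2*S); [lra|]. rewrite Heta. replace (lam*(2*S)) with (2*lam*S) by ring. lra. }
    + rewrite Rmult_0_r, sqrt_0; ring.
    + intros t ht.
      assert (hS : 0 < sqrt (a*t)) by (apply sqrt_lt_R0, Rmult_lt_0_compat; lra).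
      replace (2*lam*sqrt(a*t)/(2*sqrt(a*t))) with lam by (field; lra).
      rewrite H1. unfold D; ring.
    + intros t ht.
      assert (hS : 0 < sqrt (a*t)) by (apply sqrt_lt_R0, Rmult_lt_0_compat; lra).
      assert (hq : 2*sqrt(a*t) <> 0) by lra.
      split; [eexists; apply dTx; auto| split; [eexists; apply ds; auto|]].
      rewrite (is_derive_unique _ _ _ (ds lam a t ha ht)).
      assert (Ex : Derive (fun xi : R => D*phi(xi/(2*sqrt(a*t)))+Tinf) (2*lam*sqrt(a*t))
         = D*Derive phi (2*lam*sqrt(a*t)/(2*sqrt(a*t)))/(2*sqrt(a*t)))
        by (apply is_derive_unique, dTx; auto).
      rewrite Ex.
      replace (2*lam*sqrt(a*t)/(2*sqrt(a*t))) with lam by (field; lra).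
      rewrite Ek, Ephi'. rewrite <- Ea. field. repeat split; lra.
    + intros t ht.
      assert (hS : 0 < sqrt (a*t)) by (apply sqrt_lt_R0, Rmult_lt_0_compat; lra).
      assert (hq : 2*sqrt(a*t) <> 0) by lra.
      assert (hst : 0 < sqrt t) by (apply sqrt_lt_R0; lra).
      split. { eexists; apply dTx; auto. }
      rewrite (flux phi hphi); auto. fold D.
      replace (0/(2*sqrt(a*t))) with 0 by (field; lra).
      rewrite E0. rewrite sqrt_mult by lra. field. repeat split; lra.
Qed.
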